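(* Let $V\subseteq R_d$ be a Gotzmann monomial vector space and let $V=V_0\oplus x_iV_1$ be its $x_i$-decomposition. Then $V_0$ is Gotzmann in $Q=R/(x_i)$.
   Context: Let $\Bbbk$ be a field, $R=\Bbbk[x_1,\dots,x_n]/(x_1^2,\dots,x_n^2)$, $R_d$ its degree-$d$ component. A monomial vector space is a subspace of some $R_d$ spanned by monomials; for such $V$, $\mathbf m_1V$ is the span of $\{x_jm\}$ over monomials $m\in V$ and all $j$. A subspace $V\subseteq R_d$ is Gotzmann if $|\mathbf m_1V|\le|\mathbf m_1W|$ for every subspace $W\subseteq R_d$ with $|W|=|V|$ ($|\cdot|$ denotes dimension). Fix a variable $x_i$, let $Q=R/(x_i)$ (the analogous squarefree ring in the variables other than $x_i$, with $\mathbf n_1$ the analogous operation and Gotzmann defined analogously in $Q$). The $x_i$-decomposition of a monomial vector space $V\subseteq R_d$ is $V=V_0\oplus x_iV_1$, where $V_0\subseteq Q_d$ is spanned by the monomials of $V$ not divisible by $x_i$ and $V_1\subseteq Q_{d-1}$ is spanned by the monomials $m$ with $x_im\in V$. *)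

(* Defs.v *)
From HB Require Import structures.
From mathcomp Require Import all_boot all_order all_algebra.
Set Implicit Arguments. Unset Strict Implicit. Unset Printing Implicit Defensive.
Import GRing.Theory.
Local Open Scope ring_scope.

(* The squarefree algebra R = K[x_0..x_{n-1}]/(x_0^2,...,x_{n-1}^2), as a
   K-vector space with basis the squarefree monomials x_S, S : {set 'I_n}.
   An element is its coefficient function S |-> coefficient of x_S. *)
Definition sqf (K : fieldType) (n : nat) := {ffun {set 'I_n} -> K^o}.

Definition mono (K : fieldType) (n : nat) (S : {set 'I_n}) : sqf K n :=
  [ffun T : {set 'I_n} => if T == S then 1 else 0].

(* multiplication by the variable x_j : x_j * x_T = x_(T u {j}) if j \notin T,
   and 0 otherwise. *)
Definition xmul (K : fieldType) (n : nat) (j : 'I_n) (f : sqf K n) : sqf K n :=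
  [ffun T : {set 'I_n} => if j \in T then f (T :\ j) else 0].

(* The degree-d component of the squarefree algebra in the variables
   {x_j | j \in A}: span of the monomials x_S with S \subset A, #|S| = d.
   For A = [set: 'I_n] this is R_d; for A = ~: [set i] this is Q_d with
   Q = R/(x_i) (identified with the span of monomials not divisible by x_i). *)
Definition homog (K : fieldType) (n : nat) (A : {set 'I_n}) (d : nat)
  : {vspace sqf K n} :=
  <<[seq mono K X | X <- enum [set X : {set 'I_n} | (X \subset A) && (#|X| == d)]]>>%VS.

Definition m1 (K : fieldType) (n : nat) (A : {set 'I_n}) (W : {vspace sqf K n})
  : {vspace sqf K n} :=
  (\sum_(j in A) (linfun (xmul j) @: W))%VS.

Definition gotzmann (K : fieldType) (n : nat) (A : {set 'I_n}) (d : nat)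
  (V : {vspace sqf K n}) : Prop :=
  (V <= homog K A d)%VS /\
  forall W : {vspace sqf K n}, (W <= homog K A d)%VS -> \dim W = \dim V ->
    (\dim (m1 A V) <= \dim (m1 A W))%N.

Definition monomial_space (K : fieldType) (n : nat) (d : nat)
  (V : {vspace sqf K n}) : Prop :=
  exists M : {set {set 'I_n}}, (forall S, S \in M -> #|S| = d) /\
    V = <<[seq mono K X | X <- enum M]>>%VS.

Definition xdecomp0 (K : fieldType) (n : nat) (i : 'I_n) (d : nat)
  (V : {vspace sqf K n}) : {vspace sqf K n} :=
  <<[seq mono K X | X <- enum [set X : {set 'I_n} |
        [&& #|X| == d, i \notin X & mono K X \in V]]]>>%VS.

(* Main.v *)
Require Import Defs.
From HB Require Import structures.
From mathcomp Require Import all_boot all_order all_algebra.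
From Stdlib Require Import ClassicalEpsilon.

Module Aux.
Set Implicit Arguments. Unset Strict Implicit. Unset Printing Implicit Defensive.

Lemma exmax (I : finType) (P : pred I) (F : I -> nat) i0 : P i0 ->
  exists2 i, P i & forall j, P j -> F j <= F i.
Proof. by move=> Pi0; case: (arg_maxnP F Pi0) => i Pi Hi; exists i. Qed.

Lemma disjP (T : finType) (A B : {set T}) :
  reflect (forall x, x \in A -> x \in B -> False) [disjoint A & B].
Proof.
apply: (iffP idP) => [d x xA xB | H].
  by move: (disjointFr d xA); rewrite xB.
by rewrite -setI_eq0; apply/eqP/setP => x; rewrite !inE; apply/negbTE/negP => /andP [/H h /h].
Qed.

Lemma subI (T : finType) (A B : {set T}) : A \subset B -> forall x, (x \in A) ==> (x \in B).
Proof. by move=> /subsetP h x; apply/implyP/h. Qed.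
Lemma disI (T : finType) (A B : {set T}) : [disjoint A & B] -> forall x, ~~ ((x \in A) && (x \in B)).
Proof. by move=> d x; apply/negP => /andP [xA xB]; move: (disjointFr d xA); rewrite xB. Qed.

Ltac bcase := repeat match goal with |- context [?x \in ?A] => case: (x \in A) end.

Section Comb.
Variable n : nat.
Implicit Types (A B S T U V X Y N : {set 'I_n}) (F G L : {set {set 'I_n}}).

Definition rank S : nat := \sum_(t in S) 2 ^ t.

Lemma rankD1 S j : j \in S -> rank S = rank (S :\ j) + 2 ^ j.
Proof. by move=> jS; rewrite /rank (big_setD1 _ jS) addnC. Qed.

Lemma rank_ge S j : j \in S -> 2 ^ j <= rank S.
Proof. by move=> /rankD1 ->; apply: leq_addl. Qed.

Lemma rank_lt S m : (forall t, t \in S -> t < m) -> rank S < 2 ^ m.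
Proof.
elim: m S => [|m IH] S H.
  have -> : S = set0 by apply/setP=> t; rewrite inE; apply/negbTE/negP=> /H.
  by rewrite /rank big_set0.
case: (boolP [exists t in S, val t == m]).
  case/existsP => t /andP [tS /eqP tm].
  rewrite (rankD1 tS) expnS mul2n -addnn tm ltn_add2r; apply: IH => u.
  rewrite !inE => /andP [ut uS]; have := H u uS.
  rewrite ltnS leq_eqVlt -tm => /orP [/eqP/val_inj ue|//].
  by rewrite ue eqxx in ut.
rewrite negb_exists => /forallP Hm.
apply: (@leq_trans (2 ^ m)); last by rewrite leq_exp2l.
apply: IH => t tS; have := H t tS; rewrite ltnS leq_eqVlt => /orP [/eqP tm|//].
by have := Hm t; rewrite tS /= tm eqxx.
Qed.

Lemma rank_split A B : rank A = rank (A :&: B) + rank (A :\: B).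
Proof. by rewrite /rank (big_setID B). Qed.

Lemma rank_union A B : [disjoint A & B] -> rank (A :|: B) = rank A + rank B.
Proof.
move=> dAB; rewrite /rank -bigU //; apply: eq_bigl => x; by rewrite !inE.
Qed.

Lemma rank_sub A B : B \subset A -> rank A = rank B + rank (A :\: B).
Proof. by move=> sBA; rewrite (rank_split A B) (setIidPr sBA). Qed.

Lemma maxP S : S != set0 -> exists2 m, m \in S & forall t, t \in S -> t <= m.
Proof.
case/set0Pn => t0 tS.
have [m mS H] := @exmax _ [pred t | t \in S] (fun t : 'I_n => val t) _ tS.
by exists m.
Qed.

Lemma rank_max_side U V m : [disjoint U & V] -> m \in V ->
  (forall t, t \in U :|: V -> t <= m) -> rank U < rank V.
Proof.
move=> dUV mV H; apply: (leq_trans _ (rank_ge mV)); apply: rank_lt => t tU.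
have := H t; rewrite inE tU => /(_ isT); rewrite leq_eqVlt => /orP [/eqP e|//].
have /val_inj et : val t = val m by [].
by move: dUV => /disjP /(_ t tU); rewrite et mV => /(_ isT).
Qed.

Lemma rank_disj_lt U V : [disjoint U & V] -> rank U < rank V ->
  exists2 m, m \in V & forall t, t \in U :|: V -> t <= m.
Proof.
move=> dUV lt.
have : U :|: V != set0.
  apply/negP => /eqP e.
  have eU : U = set0 by apply/setP=> x; move/setP: e => /(_ x); rewrite !inE; case: (x \in U).
  have eV : V = set0 by apply/setP=> x; move/setP: e => /(_ x); rewrite !inE orbC; case: (x \in V).
  by move: lt; rewrite eU eV ltnn.
case/maxP => m; rewrite inE => /orP [mU|mV] H; last by exists m.
have : rank V < rank U.
  apply: (rank_max_side (U := V)) mU _; first by rewrite disjoint_sym.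
  by move=> t; rewrite setUC; apply: H.
by rewrite ltnNge ltnW.
Qed.

Lemma rank_disj_neq U V : [disjoint U & V] -> U :|: V != set0 -> rank U != rank V.
Proof.
move=> dUV; case/maxP => m; rewrite inE => /orP [mU|mV] H.
  have : rank V < rank U.
    apply: (rank_max_side (U := V)) mU _; first by rewrite disjoint_sym.
    by move=> t; rewrite setUC; apply: H.
  by rewrite ltn_neqAle eq_sym => /andP [].
by have := rank_max_side dUV mV H; rewrite ltn_neqAle => /andP [].
Qed.

Lemma rank_inj : injective rank.
Proof.
move=> A B e; apply/eqP; apply/negPn/negP => nAB.
have d : [disjoint A :\: B & B :\: A].
  by apply/disjP => x; rewrite !inE => /andP [nB _] /andP [_ xB]; rewrite xB in nB.
have ne : (A :\: B) :|: (B :\: A) != set0.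
  apply: contra nAB => /eqP h; apply/eqP/setP => x.
  move/setP: h => /(_ x); rewrite !inE.
  by case: (x \in A); case: (x \in B).
have := rank_disj_neq d ne.
by move: e; rewrite (rank_split A B) (rank_split B A) setIC => /eqP; rewrite eqn_add2l => ->.
Qed.

Definition cable U V A := (U \subset A) && [disjoint V & A].
Definition cmp U V A := if cable U V A then (A :\: U) :|: V else A.
Definition Pc U V F := [set A | cmp U V A \in F].
Definition comp U V F := (F :&: Pc U V F) :|: (cmp U V @: (F :\: Pc U V F)).
Definition compressed U V F := forall A, A \in F -> cmp U V A \in F.

Lemma cmp_inv U V A : [disjoint U & V] -> cable U V A -> (cmp U V A :\: V) :|: U = A.
Proof.
move=> dUV cA; rewrite /cmp cA; case/andP: cA => sUA dVA.
apply/setP => x; rewrite !inE.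
move: (subI sUA x) (disI dVA x) (disI dUV x); bcase; by [].
Qed.

Lemma cmp_inj U V : [disjoint U & V] -> {in [pred A | cable U V A] &, injective (cmp U V)}.
Proof.
move=> dUV A B cA cB e.
by rewrite -(cmp_inv dUV cA) -(cmp_inv dUV cB) e.
Qed.

Lemma card_comp U V F : [disjoint U & V] -> #|comp U V F| = #|F|.
Proof.
move=> dUV; rewrite /comp cardsU.
have -> : (F :&: Pc U V F) :&: (cmp U V @: (F :\: Pc U V F)) = set0.
  apply/setP => B; rewrite !inE; apply/negbTE/negP => /andP [/andP [BF _] /imsetP [A]].
  by rewrite !inE => /andP [nA _] e; rewrite e in BF; rewrite BF in nA.
rewrite cards0 subn0 card_in_imset; first by rewrite cardsID.
move=> A B; rewrite !inE => /andP [nA AF] /andP [nB BF].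
apply: (cmp_inj dUV); rewrite inE.
  by apply: contraNT nA => h; rewrite /cmp (negPf h).
by apply: contraNT nB => h; rewrite /cmp (negPf h).
Qed.

Lemma mem_comp U V F B : (B \in comp U V F) =
  ((B \in F) && (cmp U V B \in F)) || (B \in cmp U V @: (F :\: Pc U V F)).
Proof. by rewrite /comp !inE. Qed.

Lemma cmp_card U V A : #|U| = #|V| -> #|cmp U V A| = #|A|.
Proof.
rewrite /cmp; case cA: (cable U V A) => // eUV; case/andP: cA => sUA dVA.
rewrite cardsU.
have -> : (A :\: U) :&: V = set0.
  apply/setP => x; rewrite !inE; move: (disI dVA x); bcase; by [].
rewrite cards0 subn0 cardsDS // -eUV subnK //; exact: subset_leq_card.
Qed.

Lemma cmp_subN N U V A : V \subset N -> A \subset N -> cmp U V A \subset N.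
Proof.
move=> sVN sAN; rewrite /cmp; case: (cable U V A) => //.
by rewrite subUset sVN andbT; apply: subset_trans sAN; apply: subsetDl.
Qed.

Lemma cmp_rank U V A : cable U V A -> rank (cmp U V A) + rank U = rank A + rank V.
Proof.
move=> cA; rewrite /cmp cA; case/andP: cA => sUA dVA.
rewrite rank_union; last by apply/disjP => x; rewrite !inE => /andP [_ xA] xV; move: (disI dVA x); rewrite xA xV.
by rewrite (rank_sub sUA) addnC addnA addnAC.
Qed.

Definition up N F := [set Y : {set 'I_n} | [exists j in N, (j \in Y) && (Y :\ j \in F)]].

Lemma upP N F (Y : {set 'I_n}) : reflect (exists j, [/\ j \in N, j \in Y & Y :\ j \in F]) (Y \in up N F).
Proof.
rewrite inE; apply: (iffP existsP) => [[j /andP [jN /andP [jY YF]]]|[j [jN jY YF]]].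
  by exists j.
by exists j; rewrite jN jY.
Qed.

Lemma cmp_up_mem N F U V T j : V \subset N -> [disjoint U & V] -> j \in N -> j \in T ->
  cable U V T ->
  (j \notin U -> cmp U V (T :\ j) \in F) ->
  (j \in U -> exists2 y, y \in V & cmp (U :\ j) (V :\ y) (T :\ j) \in F) ->
  cmp U V T \in up N F.
Proof.
move=> sVN dUV jN jT cT H1 H2; have cT' := cT; case/andP: cT' => sUT dVT.
case: (boolP (j \in U)) => jU.
  case: (H2 jU) => y yV.
  have cB : cable (U :\ j) (V :\ y) (T :\ j).
    apply/andP; split.
      by apply/subsetP => x; rewrite !inE => /andP [-> xU]; move: (subI sUT x); rewrite xU.
    by apply/disjP => x; rewrite !inE => /andP [_ xV] /andP [_ xT]; move: (disI dVT x); rewrite xV xT.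
  rewrite /cmp cB cT => HB; apply/upP; exists y; split.
  - exact: (subsetP sVN).
  - by rewrite !inE yV orbT.
  - suff e : ((T :\: U) :|: V) :\ y = ((T :\ j) :\: (U :\ j)) :|: (V :\ y) by rewrite e.
    apply/setP => x; rewrite !inE.
    have [->|xj] := eqVneq x j.
      have yj : (j == y) = false by apply/negbTE; apply: contraTneq jU => ->; move: (disI dUV y); rewrite yV andbT.
      by rewrite yj jU jT /=; case: (j \in V).
    have [->|xy] := eqVneq x y.
      by rewrite /=; move: (disI dVT y); rewrite yV /= => /negPf ->; rewrite andbF.
    by rewrite /=; move: (subI sUT x) (disI dVT x) (disI dUV x); bcase.
have cB : cable U V (T :\ j).
  apply/andP; split.
    by apply/subsetP => x xU; rewrite !inE (subsetP sUT x xU) andbT; apply: contraNneq jU => <-.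
  by apply/disjP => x xV; rewrite !inE => /andP [_ xT]; move: (disI dVT x); rewrite xV xT.
move: (H1 jU); rewrite /cmp cB cT => HB; apply/upP; exists j; split => //.
  by rewrite !inE jT (negPf jU).
suff e : ((T :\: U) :|: V) :\ j = ((T :\ j) :\: U) :|: V by rewrite e.
apply/setP => x; rewrite !inE.
case: (eqVneq x j) => [->|xj] /=.
  by move: (disI dVT j); rewrite jT andbT => /negPf ->; rewrite andbF.
by [].
Qed.


Lemma up_comp_sub N F U V : V \subset N -> [disjoint U & V] -> #|U| = #|V| ->
  (forall x, x \in U -> exists2 y, y \in V & compressed (U :\ x) (V :\ y) F) ->
  up N (comp U V F) \subset comp U V (up N F).
Proof.
move=> sVN dUV eUV H; apply/subsetP => T /upP [j [jN jT BC]].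
rewrite mem_comp in BC; case/orP: BC => [/andP [BF cBF] | /imsetP [A]].
  have TupF : T \in up N F by apply/upP; exists j.
  rewrite mem_comp TupF /=; apply/orP; left.
  case cT: (cable U V T); last by rewrite /cmp cT.
  apply: (cmp_up_mem sVN dUV jN jT cT) => // jU.
  by case: (H j jU) => y yV Hc; exists y => //; apply: Hc.
move=> /setDP [AF nAP] eB.
have nA : cmp U V A \notin F by move: nAP; rewrite inE.
have cA : cable U V A by apply: contraNT nA => h; rewrite /cmp (negPf h).
have [v0 v0V] : exists v0, v0 \in V.
  case: (eqVneq V set0) => [V0|/set0Pn [v0 v0V]]; last by exists v0.
  move: eUV; rewrite V0 cards0 => /cards0_eq U0.
  by move: nA; rewrite /cmp cA U0 V0 setD0 setU0 AF.
have cA' := cA; case/andP: cA' => sUA dVA.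
have eT : T = j |: ((A :\: U) :|: V) by rewrite -[LHS](setD1K jT) eB /cmp cA.
have sVT : V \subset T by rewrite eT; apply/subsetP => x xV; rewrite !inE xV !orbT.
have nTc : ~~ cable U V T.
  apply/negP => /andP [_ /disjP /(_ v0 v0V)]; apply; exact: (subsetP sVT).
have cmpT : cmp U V T = T by rewrite /cmp (negPf nTc).
have jV : j \notin V.
  apply/negP => jV; have := (subsetP sVT j jV); rewrite eT.
  by move/setP: eB => /(_ j); rewrite /cmp cA !inE eqxx /= jV orbT.
case: (boolP (j \in U)) => jU.
  have TupF : T \in up N F.
    case: (H j jU) => y yV Hc.
    have cA2 : cable (U :\ j) (V :\ y) A.
      apply/andP; split.
        by apply: subset_trans sUA; apply: subsetDl.
      by apply/disjP => x; rewrite !inE => /andP [_ xV] xA; move: (disI dVA x); rewrite xV xA.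
    have := Hc A AF; rewrite /cmp cA2 => HA.
    apply/upP; exists y; split.
    - exact: (subsetP sVN).
    - exact: (subsetP sVT).
    - suff e : T :\ y = (A :\: (U :\ j)) :|: (V :\ y) by rewrite e.
      rewrite eT; apply/setP => x; rewrite !inE.
      have yj : (j == y) = false.
        apply/negbTE; apply/negP => /eqP ejy; move: (disI dUV y); rewrite yV andbT -ejy jU //.
      have [->|xj] := eqVneq x j.
        by rewrite yj /= (subsetP sUA j jU).
      have [->|xy] := eqVneq x y.
        by move: (disI dVA y); rewrite yV /= => /negPf ->; rewrite ?andbF.
      by [].
  by rewrite mem_comp TupF cmpT TupF.
have jA : j \notin A.
  apply/negP => jA; move/setP: eB => /(_ j); rewrite /cmp cA !inE eqxx /= jA (negPf jU).
  by rewrite (negPf jV).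
set A' := j |: A.
have A'up : A' \in up N F.
  by apply/upP; exists j; split => //; rewrite ?setU11 // /A' setU1K.
have cA' : cable U V A'.
  apply/andP; split.
    by apply: subset_trans sUA _; apply: subsetUr.
  apply/disjP => x xV; rewrite !inE => /orP [/eqP xj|xA].
    by rewrite -xj xV in jV.
  by move: (disI dVA x); rewrite xV xA.
have eT' : cmp U V A' = T.
  rewrite /cmp cA' eT /A'; apply/setP => x; rewrite !inE.
  have [->|xj] := eqVneq x j.
    by rewrite jU.
  by [].
case: (boolP (T \in up N F)) => TupF.
  by rewrite mem_comp TupF cmpT TupF.
rewrite mem_comp; apply/orP; right; apply/imsetP; exists A'; last by rewrite eT'.
by apply/setDP; split => //; rewrite inE eT'.
Qed.


Definition good N U V :=
  [&& U \subset N, V \subset N, [disjoint U & V], #|U| == #|V| & rank U < rank V].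
Definition rsets N r := [set X : {set 'I_n} | (X \subset N) && (#|X| == r)].
Definition initseg N r L := (L \subset rsets N r) /\
  (forall B A, B \in L -> A \in rsets N r -> rank B <= rank A -> A \in L).

Lemma good_erase N U V x : good N U V -> 1 < #|U| -> x \in U ->
  exists2 y, y \in V & good N (U :\ x) (V :\ y).
Proof.
case/and5P => sUN sVN dUV /eqP eUV lt c1 xU.
case: (rank_disj_lt dUV lt) => m mV Hm.
have [y yV ym] : exists2 y, y \in V & y != m.
  have : 0 < #|V :\ m| by move: c1; rewrite eUV (cardsD1 m V) mV.
  by rewrite card_gt0 => /set0Pn [y]; rewrite !inE => /andP [ym yV]; exists y.
exists y => //; apply/and5P; split.
- by apply: subset_trans sUN; apply: subsetDl.
- by apply: subset_trans sVN; apply: subsetDl.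
- by apply/disjP => z; rewrite !inE => /andP [_ zU] /andP [_ zV]; move: (disI dUV z); rewrite zU zV.
- by move: eUV; rewrite (cardsD1 x U) (cardsD1 y V) xU yV => /eqP; rewrite eqn_add2l.
- apply: (leq_trans _ (rank_ge (j := m) _)); last by rewrite !inE eq_sym ym.
  apply: rank_lt => t; rewrite !inE => /andP [_ tU].
  have := Hm t; rewrite inE tU => /(_ isT); rewrite leq_eqVlt => /orP [/eqP e|//].
  have /val_inj et : val t = val m by [].
  by move: (disI dUV t); rewrite tU et mV.
Qed.

Lemma cmp00 A : cmp set0 set0 A = A.
Proof.
rewrite /cmp; have -> : cable set0 set0 A.
  by apply/andP; split; [apply: sub0set | apply/disjP => x; rewrite inE].
by rewrite setD0 setU0.
Qed.

Lemma hyp_from_good N U V F : good N U V ->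
  (forall U' V', good N U' V' -> #|U'| < #|U| -> compressed U' V' F) ->
  forall x, x \in U -> exists2 y, y \in V & compressed (U :\ x) (V :\ y) F.
Proof.
move=> g H x xU; have g' := g; case/and5P: g' => _ _ _ /eqP eUV _.
case: (ltnP 1 #|U|) => c1.
  case: (good_erase g c1 xU) => y yV g2; exists y => //; apply: H g2 _.
  by rewrite (cardsD1 x U) xU.
have [y yV] : exists y, y \in V.
  by apply/set0Pn; rewrite -card_gt0 -eUV; apply/card_gt0P; exists x.
exists y => //.
have U0 : U :\ x = set0.
  by apply: cards0_eq; move: c1; rewrite (cardsD1 x U) xU add1n ltnS leqn0 => /eqP.
have V0 : V :\ y = set0.
  by apply: cards0_eq; move: c1; rewrite eUV (cardsD1 y V) yV add1n ltnS leqn0 => /eqP.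
by rewrite U0 V0 => A AF; rewrite cmp00.
Qed.

Lemma comp_disj U V F : (F :&: Pc U V F) :&: (cmp U V @: (F :\: Pc U V F)) = set0.
Proof.
apply/setP => B; rewrite !inE; apply/negbTE/negP => /andP [/andP [BF _] /imsetP [A]].
by rewrite !inE => /andP [nA _] e; rewrite e in BF; rewrite BF in nA.
Qed.

Lemma sum_union (T : finType) (X Y : {set T}) (f : T -> nat) : X :&: Y = set0 ->
  \sum_(a in X :|: Y) f a = \sum_(a in X) f a + \sum_(a in Y) f a.
Proof.
move=> d; rewrite (big_setID X); congr (_ + _); apply: eq_bigl => a; rewrite !inE.
  by case: (a \in X); rewrite /= ?andbF.
move/setP: d => /(_ a); rewrite !inE.
by case: (a \in X); case: (a \in Y).
Qed.

Definition mu F := \sum_(A in F) rank A.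

Lemma mu_comp U V F A0 : [disjoint U & V] -> rank U < rank V -> A0 \in F ->
  cmp U V A0 \notin F -> mu F < mu (comp U V F).
Proof.
move=> dUV lt A0F nA0.
have cab : forall A, A \in F :\: Pc U V F -> cable U V A.
  move=> A; rewrite !inE => /andP [nA AF]; by apply: contraNT nA => h; rewrite /cmp (negPf h).
rewrite /mu /comp sum_union ?comp_disj //.
rewrite big_imset; last first.
  by move=> A B /cab cA /cab cB; apply: (cmp_inj dUV).
rewrite (big_setID (Pc U V F)) ltn_add2l.
have A0S : A0 \in F :\: Pc U V F by rewrite !inE nA0.
rewrite (bigD1 A0) //= [X in _ < X](bigD1 A0) //= -addSn leq_add //.
  by rewrite -(ltn_add2r (rank U)) cmp_rank ?ltn_add2l // cab.
apply: leq_sum => A /andP [AS _]; rewrite -(leq_add2r (rank U)) cmp_rank.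
  by rewrite leq_add2l ltnW.
exact: cab.
Qed.

Lemma kk_helper N r F : F \subset rsets N r -> exists G,
  [/\ G \subset rsets N r, #|G| = #|F|, #|up N G| <= #|up N F| &
      forall U V, good N U V -> compressed U V G].
Proof.
move=> sF.
pose P := fun G : {set {set 'I_n}} =>
  [&& G \subset rsets N r, #|G| == #|F| & #|up N G| <= #|up N F|].
have PF : P F by rewrite /P sF eqxx leqnn.
case: (@exmax _ P mu F PF) => G PG Gmax.
case/and3P: PG => sG /eqP cG uG; exists G; split => //.
suff H : forall k U V, #|U| = k -> good N U V -> compressed U V G.
  by move=> U V gUV; apply: (H _ U V erefl).
elim/ltn_ind => k IH U V cU gUV.
case: (boolP [forall A in G, cmp U V A \in G]) => [/forall_inP h|].
  by move=> A /h.
rewrite negb_forall_in => /exists_inP [A0 A0G nA0].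
exfalso.
have g' := gUV; case/and5P: g' => sUN sVN dUV /eqP eUV lt.
have IH' : forall U' V', good N U' V' -> #|U'| < #|U| -> compressed U' V' G.
  by move=> U' V' g l; apply: (IH #|U'|) => //; rewrite -cU.
have hyp := hyp_from_good gUV IH'.
have Pc' : P (comp U V G).
  apply/and3P; split.
  - apply/subsetP => B; rewrite mem_comp => /orP [/andP [BG _]|/imsetP [A]].
      exact: (subsetP sG).
    rewrite inE => /andP [_ AG] ->; have := subsetP sG A AG.
    by rewrite !inE => /andP [sAN cA]; rewrite cmp_subN // cmp_card.
  - by rewrite card_comp // cG.
  - apply: leq_trans uG; apply: leq_trans (subset_leq_card (up_comp_sub sVN dUV eUV hyp)) _.
    by rewrite card_comp.
have := Gmax _ Pc'; rewrite leqNgt => /negP; apply.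
exact: (mu_comp dUV lt A0G nA0).
Qed.

Lemma compressed_initseg N r G : G \subset rsets N r ->
  (forall U V, good N U V -> compressed U V G) -> initseg N r G.
Proof.
move=> sG H; split => // B A BG Ar le.
have := subsetP sG B BG; rewrite !inE => /andP [sBN /eqP cB].
move: Ar; rewrite !inE => /andP [sAN /eqP cA].
case: (eqVneq A B) => [->|nAB] //.
set U := B :\: A; set V := A :\: B.
have dUV : [disjoint U & V].
  by apply/disjP => x; rewrite !inE => /andP [nA _] /andP [_ xA]; rewrite xA in nA.
have gUV : good N U V.
  apply/and5P; split => //.
  - by apply: subset_trans sBN; apply: subsetDl.
  - by apply: subset_trans sAN; apply: subsetDl.
  - by rewrite /U /V !cardsD cA cB setIC.
  - have ne : U :|: V != set0.
      apply: contra nAB => /eqP h; apply/eqP/setP => x.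
      move/setP: h => /(_ x); rewrite !inE.
      by case: (x \in A); case: (x \in B).
    rewrite ltn_neqAle (rank_disj_neq dUV ne) /=.
    by move: le; rewrite (rank_split B A) (rank_split A B) setIC leq_add2l.
have cBc : cable U V B.
  apply/andP; split; first by apply: subsetDl.
  by apply/disjP => x; rewrite !inE => /andP [nB _] xB; rewrite xB in nB.
have := H U V gUV B BG; rewrite /cmp cBc.
suff -> : (B :\: U) :|: V = A by [].
apply/setP => x; rewrite !inE; by case: (x \in A); case: (x \in B).
Qed.

Lemma initseg_compressed N r L : initseg N r L ->
  forall U V, good N U V -> compressed U V L.
Proof.
case=> sL iL U V gUV A AL.
case cA: (cable U V A); last by rewrite /cmp cA.
case/and5P: gUV => sUN sVN dUV /eqP eUV lt.
have := subsetP sL A AL; rewrite !inE => /andP [sAN cA'].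
apply: (iL A) => //.
  by rewrite !inE cmp_subN // cmp_card.
by rewrite -(leq_add2r (rank U)) cmp_rank // leq_add2l ltnW.
Qed.

Lemma up_rsets N r L : L \subset rsets N r -> up N L \subset rsets N r.+1.
Proof.
move=> sL; apply/subsetP => Y /upP [j [jN jY YL]].
have := subsetP sL _ YL; rewrite !inE => /andP [sYN /eqP cY].
rewrite (cardsD1 j Y) jY cY eqxx andbT.
apply/subsetP => x xY; case: (eqVneq x j) => [->//|xj].
by apply: (subsetP sYN); rewrite !inE xj.
Qed.

Lemma initseg_up N r L : initseg N r L -> initseg N r.+1 (up N L).
Proof.
move=> iL; have cL := initseg_compressed iL.
apply: compressed_initseg; first by apply: up_rsets; case: iL.
move=> U V gUV T /upP [j [jN jT BL]].
case cT: (cable U V T); last by rewrite /cmp cT; apply/upP; exists j.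
have g' := gUV; case/and5P: g' => sUN sVN dUV /eqP eUV lt.
apply: (cmp_up_mem sVN dUV jN jT cT).
  by move=> _; apply: cL.
move=> jU; have := hyp_from_good gUV (fun U' V' g _ => cL U' V' g) jU.
by case=> y yV h; exists y => //; apply: h.
Qed.

Lemma initseg_total N r L1 L2 : initseg N r L1 -> initseg N r L2 ->
  (L1 \subset L2) || (L2 \subset L1).
Proof.
case=> s1 i1 [s2 i2].
case: (boolP (L1 \subset L2)) => //= /subsetPn [B BL1 nBL2].
apply/subsetP => A AL2; have Ar := subsetP s2 A AL2.
apply: (i1 B) => //; case: (leqP (rank B) (rank A)) => // lt.
have Br := subsetP s1 B BL1.
by move: nBL2; rewrite (i2 A B AL2 Br (ltnW lt)).
Qed.

Lemma initseg_eq N r L1 L2 : initseg N r L1 -> initseg N r L2 -> #|L1| = #|L2| -> L1 = L2.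
Proof.
move=> i1 i2 c; case/orP: (initseg_total i1 i2) => s.
  by apply/eqP; rewrite eqEcard s c leqnn.
by apply/esym/eqP; rewrite eqEcard s c leqnn.
Qed.

Lemma KK N r F : F \subset rsets N r -> exists L,
  [/\ initseg N r L, #|L| = #|F| & #|up N L| <= #|up N F|].
Proof.
move=> sF; case: (kk_helper sF) => G [sG cG uG H].
by exists G; split => //; apply: compressed_initseg.
Qed.

Lemma KK2 N r F L : F \subset rsets N r -> initseg N r L -> #|L| = #|F| ->
  #|up N L| <= #|up N F|.
Proof.
move=> sF iL cL; case: (KK sF) => G [iG cG uG].
by rewrite (initseg_eq iL iG) // cG.
Qed.

End Comb.

Module LinPart.
Import GRing.Theory.
Local Open Scope ring_scope.

Definition asbool (P : Prop) : bool := if excluded_middle_informative P then true else false.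
Lemma asboolP (P : Prop) : reflect P (asbool P).
Proof. by rewrite /asbool; case: excluded_middle_informative => h; constructor. Qed.

Section Lin.
Variables (K : fieldType) (n : nat).
Local Notation sq := (sqf K n).
Implicit Types (M : {set {set 'I_n}}) (f g u : sq).

Lemma xmul_is_linear (j : 'I_n) : linear (@xmul K n j).
Proof.
move=> a f g; apply/ffunP=> T; rewrite !ffunE.
by case: (j \in T); rewrite ?ffunE // scaler0 addr0.
Qed.
HB.instance Definition _ (j : 'I_n) :=
  GRing.isLinear.Build K sq sq _ (@xmul K n j) (xmul_is_linear j).

Definition proj M (f : sq) : sq := [ffun T => if T \in M then f T else 0].
Lemma proj_is_linear M : linear (proj M).
Proof.
move=> a f g; apply/ffunP=> T; rewrite !ffunE.
by case: (T \in M); rewrite ?ffunE // scaler0 addr0.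
Qed.
HB.instance Definition _ M :=
  GRing.isLinear.Build K sq sq _ (proj M) (proj_is_linear M).

Definition spanM M : {vspace sq} := <<[seq mono K X | X <- enum M]>>%VS.

Lemma span_mono_vanish (s : seq {set 'I_n}) f :
  f \in <<[seq mono K X | X <- s]>>%VS -> forall Y, Y \notin s -> f Y = 0.
Proof.
elim: s f => [|X s IH] f /=.
  by rewrite span_nil memv0 => /eqP -> Y _; rewrite ffunE.
rewrite span_cons => /memv_addP [u /vlineP [k ->] [v /IH Hv ->]] Y.
rewrite inE negb_or => /andP [YX Ys].
by rewrite !ffunE (negPf YX) (Hv Y Ys) scaler0 add0r.
Qed.

Lemma spanMP M f : reflect (forall Y, Y \notin M -> f Y = 0) (f \in spanM M).
Proof.
apply: (iffP idP) => [h Y YM | h].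
  by apply: (span_mono_vanish h); rewrite mem_enum.
have -> : f = \sum_(X in M) f X *: mono K X.
  apply/ffunP => Y; rewrite sum_ffunE.
  case: (boolP (Y \in M)) => YM.
    rewrite (bigD1 Y) //= big1 ?addr0.
      by rewrite !ffunE eqxx /=; rewrite -[RHS]/(f Y * 1) mulr1.
    by move=> X /andP [_ XY]; rewrite !ffunE eq_sym (negPf XY) /= scaler0.
  rewrite h // big1 // => X XM; rewrite !ffunE.
  case: eqP => [e|_]; last by rewrite /= scaler0.
  by rewrite e XM in YM.
apply: rpred_sum => X XM; apply: rpredZ; apply: memv_span; apply/mapP; exists X => //.
by rewrite mem_enum.
Qed.

Lemma free_mono (s : seq {set 'I_n}) : uniq s -> free [seq mono K X | X <- s].
Proof.
elim: s => [|X s IH] /=; first by rewrite /free span_nil dimv0.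
case/andP => Xs us; rewrite free_cons IH // andbT.
apply/negP => /span_mono_vanish /(_ X Xs); rewrite ffunE eqxx => /eqP.
by rewrite oner_eq0.
Qed.

Lemma dim_spanM M : \dim (spanM M) = #|M|.
Proof.
by have := free_mono (enum_uniq (mem M)); rewrite /free size_map -cardE => /eqP.
Qed.

Lemma mono_spanM M X : (mono K X \in spanM M) = (X \in M).
Proof.
apply/idP/idP => [/spanMP h|XM].
  apply: contraT => nX; have := h X nX; rewrite ffunE eqxx => /eqP.
  by rewrite oner_eq0.
by apply: memv_span; apply/mapP; exists X; rewrite ?mem_enum.
Qed.

Lemma spanM_sub M1 M2 : M1 \subset M2 -> (spanM M1 <= spanM M2)%VS.
Proof.
move=> s; apply/subvP => f /spanMP h; apply/spanMP => Y YM2; apply: h.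
by apply: contra YM2; apply: (subsetP s).
Qed.

Lemma m1_spanM A M : m1 A (spanM M) = spanM (up A M).
Proof.
apply/eqP; rewrite eqEsubv; apply/andP; split.
  apply/subv_sumP => j jA; apply/subvP => g /memv_imgP [f fM ->]; rewrite lfunE /=.
  apply/spanMP => Y nY; rewrite ffunE; case: ifP => // jY.
  move/spanMP: fM; apply; apply: contra nY => h; apply/upP; exists j.
  by split.
apply/span_subvP => g /mapP [Y]; rewrite mem_enum => /upP [j [jA jY YM]] ->.
apply: (sumv_sup j) => //.
have -> : mono K Y = linfun (xmul j) (mono K (Y :\ j)).
  rewrite lfunE; apply/ffunP => Z; rewrite !ffunE /=.
  case: (boolP (j \in Z)) => jZ.
    suff -> : (Z == Y) = (Z :\ j == Y :\ j) by [].
    apply/eqP/eqP => [->|e] //.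
    by rewrite -(setD1K jZ) -(setD1K jY) e.
  by case: eqP => // e; rewrite e jY in jZ.
by rewrite -memvE; apply: memv_img; rewrite mono_spanM.
Qed.


Definition is_lead f S := f S != 0 /\ forall T, (rank S < rank T)%N -> f T = 0.

Lemma lead_exists f : f != 0 -> exists S, is_lead f S.
Proof.
move=> nf; have [S0 fS0] : exists S, f S != 0.
  case: (boolP [exists S, f S != 0]) => [/existsP //|].
  rewrite negb_exists => /forallP h; move: nf.
  have -> : f = 0 by apply/ffunP => S; rewrite ffunE; apply/eqP; move: (h S); rewrite negbK.
  by rewrite eqxx.
case: (@exmax _ [pred S | f S != 0] (@rank n) S0 fS0) => S fS H.
exists S; split => // T lt; apply/eqP; apply: contraTT lt => fT; rewrite -leqNgt; exact: H.
Qed.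

Lemma lead_card (U : {vspace sq}) M :
  (forall S, S \in M -> exists2 u, u \in U & is_lead u S) -> (#|M| <= \dim U)%N.
Proof.
move=> H; set P := (linfun (proj M) @: U)%VS.
have sub : (spanM M <= P)%VS.
  apply/span_subvP => g0 /mapP [S]; rewrite mem_enum => SM ->.
  suff h : forall k S, (rank S < k)%N -> S \in M -> mono K S \in P by apply: (h (rank S).+1).
  elim=> [|k IH] {}S lt {}SM; first by rewrite ltn0 in lt.
  case: (H S SM) => u Uu [uS0 uS].
  have pu : linfun (proj M) u \in P := memv_img _ Uu.
  set g := linfun (proj M) u - u S *: mono K S.
  have gP : g \in P.
    have sM' : (spanM [set T in M | (rank T < rank S)%N] <= P)%VS.
      apply/span_subvP => h /mapP [T]; rewrite mem_enum inE => /andP [TM lT] ->.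
      by apply: IH => //; rewrite (leq_trans lT) // -ltnS.
    apply: (subvP sM'); apply/spanMP => T; rewrite inE negb_and => hT.
    rewrite /g lfunE !ffunE /=.
    case TM: (T \in M) => /=.
      move: hT; rewrite TM /= -leqNgt => le.
      case: (eqVneq T S) => [->|TS]; first by rewrite -[(u S)%:A]/(u S * 1) mulr1 subrr.
      rewrite /= scaler0 subr0; apply: uS.
      by rewrite ltn_neqAle le andbT; apply: contra TS => /eqP e; apply/eqP/rank_inj.
    case: (eqVneq T S) => [e|TS]; first by rewrite e SM in TM.
    by rewrite /= scaler0 subr0.
  have -> : mono K S = (u S)^-1 *: (linfun (proj M) u - g).
    by rewrite /g opprB addrC subrK scalerA mulVf // scale1r.
  by rewrite memvZ // memvB.
have le : (\dim (spanM M) <= \dim P)%N := dimvS sub.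
rewrite -dim_spanM (leq_trans le) //.
by rewrite -(limg_ker_dim (linfun (proj M)) U) leq_addl.
Qed.

Definition LT (U : {vspace sq}) := [set S : {set 'I_n} | asbool (exists2 u, u \in U & is_lead u S)].

Lemma LT_card (U : {vspace sq}) : #|LT U| = \dim U.
Proof.
apply/eqP; rewrite eqn_leq; apply/andP; split.
  by apply: lead_card => S; rewrite inE => /asboolP.
set L := LT U.
have inj : (U :&: lker (linfun (proj L)) = 0)%VS.
  apply/eqP; rewrite -subv0; apply/subvP => u; rewrite memv_cap memv_ker memv0 => /andP [Uu /eqP pu].
  apply/negPn/negP => nu; case: (lead_exists nu) => S lS.
  have SL : S \in L by rewrite inE; apply/asboolP; exists u.
  move/ffunP: pu => /(_ S); rewrite lfunE !ffunE SL => e.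
  by case: lS; rewrite e eqxx.
rewrite -(limg_dim_eq inj) -(dim_spanM L) dimvS //.
apply/subvP => g /memv_imgP [u _ ->]; apply/spanMP => T nT.
by rewrite lfunE ffunE (negPf nT).
Qed.

Lemma up_LT A (W : {vspace sq}) : (#|up A (LT W)| <= \dim (m1 A W))%N.
Proof.
apply: lead_card => Y /upP [j [jA jY]]; rewrite inE => /asboolP [u Wu [uS uH]].
exists (xmul j u).
  have s : (linfun (xmul j) @: W <= m1 A W)%VS by apply: (sumv_sup j).
  by apply: (subvP s); rewrite -[xmul j u]lfunE; apply: memv_img.
split; first by rewrite ffunE jY.
move=> T lt; rewrite ffunE; case: ifP => // jT; apply: uH.
by move: lt; rewrite (rankD1 jY) (rankD1 jT) ltn_add2r.
Qed.

Lemma LT_sub (U : {vspace sq}) (R : {set {set 'I_n}}) : (U <= spanM R)%VS -> LT U \subset R.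
Proof.
move=> s; apply/subsetP => S; rewrite inE => /asboolP [u Uu [uS _]].
apply: contraT => nS; have := subvP s u Uu => /spanMP /(_ S nS) e.
by rewrite e eqxx in uS.
Qed.

End Lin.

End LinPart.
Import LinPart.

Section Join.
Variable n : nat.
Variable i : 'I_n.
Local Notation N := (~: [set i]).
Implicit Types (G : {set {set 'I_n}}).

Definition avoid G := forall X, X \in G -> i \notin X.
Definition ins G := [set i |: X | X in G].

Lemma mem_ins G Y : avoid G -> (Y \in ins G) = (i \in Y) && (Y :\ i \in G).
Proof.
move=> aG; apply/imsetP/andP => [[X XG ->]|[iY YG]].
  by rewrite setU11 setU1K ?aG.
by exists (Y :\ i) => //; rewrite setD1K.
Qed.

Lemma card_ins G : avoid G -> #|ins G| = #|G|.
Proof.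
move=> aG; apply: card_in_imset => X Y XG YG e.
by rewrite -(setU1K (aG X XG)) -(setU1K (aG Y YG)) e.
Qed.

Lemma avoid_up G : avoid G -> avoid (up N G).
Proof.
move=> aG Y /upP [j [jN jY YG]]; have := aG _ YG; rewrite !inE negb_and.
case/orP => // /negPn /eqP ij; by move: jN; rewrite -ij !inE eqxx.
Qed.

Lemma avoid_rsets r G : G \subset rsets N r -> avoid G.
Proof.
move=> s X XG; have := subsetP s X XG; rewrite inE => /andP [sX _].
by apply/negP => /(subsetP sX); rewrite !inE eqxx.
Qed.

Lemma avoidU G1 G2 : avoid G1 -> avoid G2 -> avoid (G1 :|: G2).
Proof. by move=> a1 a2 X /setUP [/a1|/a2]. Qed.

Lemma setD1C (Y : {set 'I_n}) a b : Y :\ a :\ b = Y :\ b :\ a.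
Proof. by apply/setP => x; rewrite !inE; case: (x == a); case: (x == b). Qed.

Lemma up_join G0 G1 : avoid G0 -> avoid G1 ->
  up [set: 'I_n] (G0 :|: ins G1) = up N G0 :|: ins (G0 :|: up N G1).
Proof.
move=> a0 a1; have a01 := avoidU a0 (avoid_up a1).
apply/setP => Y; apply/idP/idP.
  case/upP => j [_ jY /setUP [Y0|Y1]].
    case: (eqVneq j i) => [ji|ji].
      move: jY Y0; rewrite ji => iY Y0.
      by apply/setUP; right; rewrite mem_ins // iY /=; apply/setUP; left.
    apply/setUP; left; apply/upP; exists j; split => //.
    by rewrite !inE ji.
  rewrite mem_ins // in Y1; case/andP: Y1 => iYj Y1.
  move: (iYj); rewrite in_setD1 => /andP [ij iY].
  apply/setUP; right; rewrite mem_ins // iY /=; apply/setUP; right.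
  apply/upP; exists j; split.
  - by rewrite !inE eq_sym.
  - by rewrite !inE eq_sym ij.
  - by rewrite setD1C.
case/setUP => [/upP [j [jN jY Y0]]|].
  by apply/upP; exists j; split => //; apply/setUP; left.
rewrite mem_ins // => /andP [iY /setUP [Y0|/upP [j [jN jYi Y1]]]].
  by apply/upP; exists i; split => //; apply/setUP; left.
move: (jYi); rewrite in_setD1 => /andP [ji jY].
apply/upP; exists j; split => //.
apply/setUP; right; rewrite mem_ins // !inE eq_sym ji iY /=.
by rewrite setD1C.
Qed.

Lemma card_join G0 G1 : avoid G0 -> avoid G1 -> #|G0 :|: ins G1| = #|G0| + #|G1|.
Proof.
move=> a0 a1; rewrite cardsU card_ins //.
suff -> : G0 :&: ins G1 = set0 by rewrite cards0 subn0.
apply/setP => X; rewrite !inE mem_ins //; apply/negbTE/negP => /andP [/a0 iX /andP [iX' _]].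
by rewrite iX' in iX.
Qed.

Lemma card_up_join G0 G1 : avoid G0 -> avoid G1 ->
  #|up [set: 'I_n] (G0 :|: ins G1)| = #|up N G0| + #|G0 :|: up N G1|.
Proof.
move=> a0 a1; rewrite up_join // card_join //.
  exact: avoid_up.
exact: avoidU a0 (avoid_up a1).
Qed.

End Join.


End Aux.
Import Aux. Import Aux.LinPart.

Theorem proposition4p5 (K : fieldType) (n d : nat) (i : 'I_n)
  (V : {vspace sqf K n}) :
  monomial_space d V ->
  gotzmann [set: 'I_n] d V ->
  gotzmann (~: [set i]) d (xdecomp0 i d V).
Proof.
case=> M [Msz eV]; subst V; case=> _ gV.
set N := ~: [set i].
have hom : forall A r, homog K A r = spanM K (rsets A r) by [].
set M0 := [set X in M | i \notin X].
set M1 := [set X : {set 'I_n} | (i \notin X) && (i |: X \in M)].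
have sM0 : M0 \subset rsets N d.
  apply/subsetP => X; rewrite !inE => /andP [XM iX]; rewrite (Msz X XM) eqxx andbT.
  by apply/subsetP => x xX; rewrite !inE; apply: contraNneq iX => <-.
have sM1 : M1 \subset rsets N d.-1.
  apply/subsetP => X; rewrite !inE => /andP [iX XM]; have := Msz _ XM.
  rewrite cardsU1 iX add1n => <- /=; rewrite eqxx andbT.
  by apply/subsetP => x xX; rewrite !inE; apply: contraNneq iX => <-.
have a0 : avoid i M0 := avoid_rsets sM0.
have a1 : avoid i M1 := avoid_rsets sM1.
have eM : M = M0 :|: ins i M1.
  apply/setP => X; rewrite !inE mem_ins //.
  case: (boolP (i \in X)) => iX /=; last by rewrite andbT orbF.
  by rewrite andbF /= !inE setD1K // eqxx.
have M1d : d = 0%N -> M1 = set0.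
  move=> d0; apply/setP => X; rewrite !inE; apply/negbTE/negP => /andP [iX XM].
  by have := Msz _ XM; rewrite d0 cardsU1 iX.
have eV0 : xdecomp0 i d (spanM K M) = spanM K M0.
  rewrite /xdecomp0 -/(spanM K _); congr (spanM K _).
  apply/setP => X; rewrite !inE mono_spanM.
  case XM: (X \in M); rewrite ?andbF // andbT.
  by rewrite (Msz X XM) eqxx.
rewrite eV0; split; first by rewrite hom; apply: spanM_sub.
move=> W sW dW.
rewrite dim_spanM in dW.
rewrite m1_spanM dim_spanM.
set T := LT W.
have cT : #|T| = #|M0| by rewrite /T LT_card.
have sT : T \subset rsets N d by apply: LT_sub; rewrite -hom.
have uT : #|up N T| <= \dim (m1 N W) := up_LT _ W.
case: (KK sT) => L0 [iL0 cL0 uL0].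
case: (KK sM1) => L1 [iL1 cL1 uL1].
have aL0 : avoid i L0 by apply: avoid_rsets; case: iL0 => s _; exact: s.
have aL1 : avoid i L1 by apply: avoid_rsets; case: iL1 => s _; exact: s.
set W2 := spanM K (L0 :|: ins i L1).
have sW2 : (W2 <= homog K [set: 'I_n] d)%VS.
  rewrite hom; apply: spanM_sub; apply/subsetP => X /setUP [XL0|].
    case: iL0 => s _; have := subsetP s X XL0; rewrite !inE => /andP [_ ->].
    by rewrite subsetT.
  rewrite mem_ins // => /andP [iX XL1]; case: iL1 => s _.
  have := subsetP s _ XL1; rewrite !inE => /andP [_ /eqP c].
  rewrite subsetT /=.
  case: (posnP d) => [d0|dpos].
    have : #|L1| = 0 by rewrite cL1 (M1d d0) cards0.
    by move/cards0_eq => L10; rewrite L10 inE in XL1.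
  by rewrite (cardsD1 i X) iX c add1n prednK.
have dW2 : \dim W2 = \dim (spanM K M).
  by rewrite !dim_spanM card_join // cL0 cT cL1 eM card_join.
have := gV W2 sW2 dW2.
rewrite /W2 !m1_spanM !dim_spanM eM !card_up_join //.
have key : #|L0 :|: up N L1| <= #|M0 :|: up N M1|.
  case: (eqVneq L1 set0) => [L10|nL1].
    have -> : up N L1 = set0.
      by apply/setP => Y; rewrite in_set0; apply/negbTE/negP => /upP [j [_ _]]; rewrite L10 inE.
    by rewrite setU0 cL0 cT; apply: subset_leq_card; apply: subsetUl.
  case: (posnP d) => [d0|dpos].
    by move: nL1; rewrite -cards_eq0 cL1 (M1d d0) cards0.
  have iU : initseg N d (up N L1) by rewrite -(prednK dpos); apply: initseg_up.
  case/orP: (initseg_total iL0 iU) => s.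
    rewrite (setUidPr s); apply: leq_trans uL1 _; apply: subset_leq_card; apply: subsetUr.
  by rewrite (setUidPl s) cL0 cT; apply: subset_leq_card; apply: subsetUl.
move=> h.
apply: leq_trans uT; apply: leq_trans uL0.
rewrite -(leq_add2r #|M0 :|: up N M1|); apply: leq_trans h _.
by rewrite leq_add2l.
Qed.
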